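(* For each $n$, let $G_s(\alpha,k)$ be a uniform random temporal star on a star with $n$ vertices, where $\alpha=\alpha(n)$ and $k=k(n)$ satisfy $\alpha\ge 2n$ and $k\ge 6n\ln n$. Then the probability that $G_s(\alpha,k)$ is explorable (all its edges can be explored) tends to $1$ as $n\to\infty$.
   Context: A uniform random temporal star $G_s(\alpha,k)$: take a star $G_s$ with center $c$ and $n-1$ leaves; each edge independently receives $k$ labels, each chosen independently and uniformly at random from $\{1,2,\dots,\alpha\}$ (labels are the discrete times at which the edge is available). A journey is a sequence of time edges $(u,u_1,l_1),(u_1,u_2,l_2),\dots$, each $l_t$ a label of the edge traversed, with strictly increasing labels. The temporal star is explorable if there is a journey starting and ending at $c$ that visits every vertex. *)

(* Defs.v *)
From HB Require Import structures.
From mathcomp Require Import all_boot all_order all_algebra.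
From mathcomp Require Import all_classical all_reals all_analysis.
Set Implicit Arguments. Unset Strict Implicit. Unset Printing Implicit Defensive.
Import Order.TTheory GRing.Theory Num.Theory.

(* A star with n vertices: center [None] and n-1 leaves [Some i], i : 'I_n.-1.
   The only edges are {None, Some i}; we identify edge {c, Some i} with i. *)
Definition star_vertex (n : nat) := option 'I_n.-1.

(* A temporal labelling of the star with k labels per edge, each label in
   {1, ..., alpha}: the j-th label of edge i is (lab i j).+1. *)
Definition star_labelling (n alpha k : nat) :=
  {ffun 'I_n.-1 -> {ffun 'I_k -> 'I_alpha}}.

Definition edge_has_label (n alpha k : nat) (lab : star_labelling n alpha k)
  (u v : star_vertex n) (l : nat) : Prop :=
  match u, v with
  | None, Some i | Some i, None => exists j : 'I_k, (lab i j : nat).+1 = l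
  | _, _ => False
  end.

(* [journey_from lab u t s]: starting at vertex u, where the last used label
   was t (t = 0 initially, labels are >= 1), the sequence s of
   (next vertex, label) steps is a journey: each step traverses an edge
   of the star at one of its labels, labels strictly increasing. *)
Fixpoint journey_from (n alpha k : nat) (lab : star_labelling n alpha k)
  (u : star_vertex n) (t : nat) (s : seq (star_vertex n * nat)) : Prop :=
  match s with
  | [::] => True
  | (v, l) :: s' => edge_has_label lab u v l /\ (t < l)%N /\
                    journey_from lab v l s'
  end.

Definition explorable (n alpha k : nat) (lab : star_labelling n alpha k) : Prop :=
  exists s : seq (star_vertex n * nat),
    journey_from lab None 0 s /\
    last None (map fst s) = None /\
    (forall v : star_vertex n, v = None \/ v \in map fst s).

Definition prob_explorable (R : realType) (n alpha k : nat) : R :=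
  (#|[set lab : star_labelling n alpha k | `[< explorable lab >]]|%:R /
   #|{: star_labelling n alpha k}|%:R)%R.

(* Main.v *)
Require Import Defs.
From HB Require Import structures.
From mathcomp Require Import all_boot all_order all_algebra.
From mathcomp Require Import zify.
Set Implicit Arguments. Unset Strict Implicit. Unset Printing Implicit Defensive.

Lemma card_bad n alpha k (i : 'I_n.-1) (P : pred 'I_alpha) :
  #|[set lab : star_labelling n alpha k | [forall j, P (lab i j)]]| * #|{ffun 'I_k -> 'I_alpha}|
  = #|P| ^ k * #|{: star_labelling n alpha k}|.
Proof.
pose F := fun x : 'I_n.-1 => if x == i then mem (ffun_on P) else mem (@predT {ffun 'I_k -> 'I_alpha}).
have -> : #|[set lab : star_labelling n alpha k | [forall j, P (lab i j)]]| = #|family F|.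
  apply: eq_card => lab; rewrite inE.
  apply/forallP/familyP.
    move=> H x; rewrite /F; case: eqP => [->|_] //=.
    by apply/ffun_onP.
  move=> H; move: (H i); rewrite /F eqxx => /ffun_onP. done.
rewrite card_family foldrE big_map big_enum /=.
rewrite (bigD1 i) //=.
have eF : \prod_(x < n.-1 | x != i) #|F x| = \prod_(x < n.-1 | x != i) #|{ffun 'I_k -> 'I_alpha}|.
  by apply: eq_bigr => x /negbTE Hx; rewrite /F Hx; apply: eq_card.
have eL : #|{: star_labelling n alpha k}| = #|{ffun 'I_k -> 'I_alpha}| * \prod_(x < n.-1 | x != i) #|{ffun 'I_k -> 'I_alpha}|.
  rewrite /star_labelling card_ffun -prod_nat_const (bigD1 i) //.
have eFi : #|F i| = #|P| ^ k by rewrite /F eqxx card_ffun_on card_ord.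
rewrite eF eL eFi.
rewrite mulnCA mulnC. done.
Qed.
From mathcomp Require Import boolp unstable.
Definition blk alpha m b : pred 'I_alpha := fun x => (b * m <= x) && (x < b * m + m).

Lemma card_nblk alpha m b : b * m + m <= alpha -> #|[predC @blk alpha m b]| <= alpha - m.
Proof.
move=> Hb.
have Hf : forall j : 'I_m, b * m + j < alpha by move=> j; have := ltn_ord j; lia.
pose f := fun j => Ordinal (Hf j).
have finj : injective f.
  by move=> a c /(congr1 val) /= Hac; apply: val_inj => /=; lia.
have : #|[set f j | j in 'I_m]| <= #|@blk alpha m b|.
  apply: subset_leq_card; apply/subsetP => x /imsetP [j _ ->].
  by rewrite /blk /= unfold_in /=; have := ltn_ord j; lia.
rewrite card_imset // card_ord.
have := cardC (@blk alpha m b); rewrite card_ord.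
rewrite !cardE. lia.
Qed.
Section Build.
Variables (n alpha k m : nat) (lab : star_labelling n alpha k).
Variables (x y : 'I_n.-1 -> 'I_k).
Hypothesis hx : forall i : 'I_n.-1, 2 * i* m <= lab i (x i) < 2 * i* m + m.
Hypothesis hy : forall i : 'I_n.-1, 2 * i* m + m <= lab i (y i) < 2 * i* m + 2* m.

Definition build (r : seq 'I_n.-1) : seq (star_vertex n * nat) :=
  flatten [seq [:: (Some i, (lab i (x i)).+1); (None, (lab i (y i)).+1)] | i <- r].

Lemma build_journey (r : seq 'I_n.-1) (t : nat) :
  sorted (fun a b : 'I_n.-1 => a < b) r ->
  (forall i, i \in r -> t <= 2 * i* m) -> journey_from lab None t (build r).
Proof.
elim: r t => [|i r IH] t //= Hs Ht.
have Hi := hx i; have Hyi := hy i.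
have := Ht i (mem_head _ _) => Hti.
split; first by exists (x i).
split; first by lia.
split; first by exists (y i).
split; first by lia.
apply: IH; first exact: path_sorted Hs.
move=> j Hj.
have : all (fun b : 'I_n.-1 => i < b) r.
  by apply: (order_path_min _ Hs) => a b c; apply: ltn_trans.
move/allP/(_ j Hj) => Hij.
have : 2 * i * m + 2 * m <= 2 * j * m.
  by nia.
lia.
Qed.

Lemma build_last r : last None (map fst (build r)) = None.
Proof. by elim: r => //= i r IH. Qed.

Lemma build_mem r i : i \in r -> Some i \in map fst (build r).
Proof.
elim: r => //= j r IH; rewrite in_cons => /orP [/eqP ->|H].
  by rewrite mem_head.
by rewrite !in_cons IH // !orbT.
Qed.

Lemma build_explorable : explorable lab.
Proof.
exists (build (enum 'I_n.-1)); split.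
  apply: build_journey => //.
  by have := iota_ltn_sorted 0 n.-1; rewrite -val_enum_ord sorted_map.
split; first exact: build_last.
case=> [i|]; [right|by left].
by apply: build_mem; rewrite mem_enum.
Qed.
End Build.

Lemma count_bound n alpha k m : 2 * n.-1 * m <= alpha ->
  (#|{: star_labelling n alpha k}| - #|[set lab : star_labelling n alpha k | `[< explorable lab >]]|) * alpha ^ k
   <= 2 * n.-1 * (alpha - m) ^ k * #|{: star_labelling n alpha k}|.
Proof.
move=> Hm.
set E := [set lab : star_labelling n alpha k | `[< explorable lab >]].
pose A := fun p : 'I_n.-1 * 'I_2 => [set lab : star_labelling n alpha k | [forall j, ~~ @blk alpha m (2 * p.1 + p.2) (lab p.1 j)]].
have sub : ~: E \subset \bigcup_p A p.
  apply/subsetP => lab; rewrite !inE => nE.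
  case: (boolP [exists p, lab \in A p]) => [/existsP [p Hp]|/existsPn H].
    by apply/bigcupP; exists p.
  exfalso; move/negP: nE; apply; apply/asboolP.
  have Hx : forall i : 'I_n.-1, exists j, @blk alpha m (2 * i + 0) (lab i j).
    move=> i; move: (H (i, ord0)); rewrite inE negb_forall => /existsP [j].
    by rewrite negbK; exists j.
  have Hy : forall i : 'I_n.-1, exists j, @blk alpha m (2 * i + 1) (lab i j).
    move=> i; move: (H (i, ord_max)); rewrite inE negb_forall => /existsP [j].
    by rewrite negbK; exists j.
  have [x hx] := fin_all_exists Hx; have [y hy] := fin_all_exists Hy.
  apply: (@build_explorable n alpha k m lab x y) => i.
    by move: (hx i); rewrite /blk => /andP [] /=; nia.
  by move: (hy i); rewrite /blk => /andP [] /=; nia.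
have c1 : #|~: E| <= \sum_p #|A p| := leq_trans (subset_leq_card sub) (card_big_setU _ _ _).
have c2 : forall p, #|A p| * alpha ^ k <= (alpha - m) ^ k * #|{: star_labelling n alpha k}|.
  move=> [i b].
  have -> : A (i, b) = [set lab : star_labelling n alpha k | [forall j, [predC @blk alpha m (2 * i + b)] (lab i j)]].
    by apply/setP => lab; rewrite !inE.
  have eT : alpha ^ k = #|{ffun 'I_k -> 'I_alpha}| by rewrite card_ffun !card_ord.
  rewrite eT card_bad.
  rewrite leq_mul2r; apply/orP; right.
  have Hc : #|[predC @blk alpha m (2 * i + b)]| <= alpha - m.
    apply: card_nblk.
    have := ltn_ord i; have := ltn_ord b; nia.
  clear -Hc; elim: k => [|k' IH] //; rewrite !expnS; exact: leq_mul.
rewrite -{1}(cardsC E) addKn.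
apply: (leq_trans (leq_mul c1 (leqnn _))).
rewrite big_distrl /=.
apply: leq_trans; first by apply: leq_sum => p _; exact: c2.
by rewrite sum_nat_const card_prod !card_ord (mulnC n.-1) !mulnA.
Qed.

From mathcomp Require Import all_classical all_reals all_analysis.
From mathcomp Require Import ring lra.
Import Order.TTheory GRing.Theory Num.Theory.
Import numFieldNormedType.Exports.
Local Open Scope ring_scope.

Lemma real_bound (R : realType) n alpha k : (2 <= n)%N -> (2 * n <= alpha)%N ->
  6 * n%:R * ln (n%:R : R) <= k%:R ->
  1 - prob_explorable R n alpha k <= 2 * expR (- (ln (n%:R : R)) / 2).
Proof.
case: n => [|N] hn ha hk; first by [].
have hN : (1 <= N)%N by lia.
have h2m : (2 * N * (alpha %/ (2 * N)) <= alpha)%N by rewrite mulnC leq_trunc_div.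
have hm1 : (1 <= alpha %/ (2 * N))%N by rewrite divn_gt0; lia.
have hc := ltn_ceil alpha (_ : (0 < 2 * N)%N).
move: (alpha %/ (2 * N))%N h2m hm1 hc => m h2m hm1 hc.
have h4 : (alpha <= 4 * N.+1 * m)%N.
  have {hc} hc := hc ltac:(lia).
  have e1 : (N <= N * m)%N by rewrite leq_pmulr.
  by nia.
have cb := @count_bound N.+1 alpha k m h2m.
set Lc := #|{: star_labelling N.+1 alpha k}| in cb *.
set Ec := #|[set lab : star_labelling N.+1 alpha k | `[< explorable lab >]]| in cb *.
have hEL : (Ec <= Lc)%N by apply: max_card.
have hL : (0 < Lc)%N by rewrite /Lc card_ffun card_ffun !card_ord !expn_gt0; apply/orP; left; lia.
rewrite /prob_explorable -/Lc -/Ec.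
have hLr : 0 < Lc%:R :> R by rewrite ltr0n.
have -> : 1 - Ec%:R / Lc%:R = (Lc - Ec)%:R / Lc%:R :> R.
  by rewrite natrB // mulrBl divff // gt_eqF.
set z := expR (- (ln (N.+1%:R : R)) / 2).
have hz : 0 < z by apply: expR_gt0.
have ha0 : 0 < alpha%:R :> R by rewrite ltr0n; lia.
have hn0 : 0 < N.+1%:R :> R by rewrite ltr0n; lia.
have key : 2 * N%:R * (alpha - m)%:R ^+ k <= 2 * z * alpha%:R ^+ k :> R.
  set a := alpha%:R : R; set n' := N.+1%:R : R.
  set r := (4 * n')^-1.
  have hr : 0 < r by rewrite invr_gt0 mulr_gt0.
  have hr1 : r <= 1.
    rewrite /r invf_le1 ?mulr_gt0 //. 
    have : 1 <= n' by rewrite /n' ler1n.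
    lra.
  have hma : (m <= alpha)%N by nia.
  have hmr : a * r <= m%:R.
    rewrite ler_pdivrMr ?mulr_gt0 // /a /n' -[4]/(4%:R) -!natrM ler_nat; nia.
  have s1 : 0 <= (alpha - m)%:R :> R by [].
  have s2 : (alpha - m)%:R <= a * (1 - r) :> R.
    by rewrite natrB // -/a mulrBr mulr1 lerB.
  have s3 : (alpha - m)%:R ^+ k <= a ^+ k * expR (- r) ^+ k :> R.
    rewrite -exprMn; apply: lerXn2r; rewrite ?nnegrE //.
      by rewrite mulr_ge0 // ltW.
    apply: (le_trans s2); rewrite ler_pM2l //.
    exact: expR_ge1Dx.
  have s4 : expR (- r) ^+ k <= n'^-1 * z.
    rewrite -expRM_natl /z -(lnK (_ : n' \in Num.pos)) ?posrE // -expRN -expRD.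
    rewrite ler_expR.
    have hk' := ler_wpM2r (ltW hr) hk.
    have e : 6 * n' * ln n' * r = 3 / 2 * ln n' by rewrite /r; field; rewrite gt_eqF.
    rewrite -/n' in hk' e *. lra.
  set A := a ^+ k in s3 *; set E := expR (- r) ^+ k in s3 s4.
  have hA : 0 <= A by rewrite exprn_ge0 // ltW.
  have hE : 0 <= E by rewrite exprn_ge0 // ltW // expR_gt0.
  have hN0 : 0 <= N%:R :> R by [].
  have p0 : N%:R * (alpha - m)%:R ^+ k <= N%:R * (A * E) by rewrite ler_wpM2l.
  have p1 : N%:R * (A * E) <= N%:R * (A * (n'^-1 * z)) by rewrite ler_wpM2l // ler_wpM2l.
  have p2 : N%:R * (A * (n'^-1 * z)) = (N%:R * n'^-1) * (A * z) by ring.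
  have hNn' : N%:R * n'^-1 <= 1.
    by rewrite ler_pdivrMr // mul1r /n' ler_nat.
  have p3 : (N%:R * n'^-1) * (A * z) <= A * z.
    by rewrite ler_piMl // mulr_ge0 // ltW.
  have q : N%:R * (alpha - m)%:R ^+ k <= A * z.
    by rewrite (le_trans p0) // (le_trans p1) // p2.
  by rewrite -mulrA -(mulrA 2 z A) ler_pM2l // (mulrC z A).
rewrite ler_pdivrMr //.
have cbr : (Lc - Ec)%:R * alpha%:R ^+ k <= 2 * N%:R * (alpha - m)%:R ^+ k * Lc%:R :> R.
  by rewrite -!natrX -!natrM ler_nat.
rewrite -(ler_pM2r (_ : 0 < alpha%:R ^+ k)); last by apply: exprn_gt0.
apply: (le_trans cbr).
by rewrite [X in _ <= X]mulrAC (ler_pM2r hLr).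
Qed.

Lemma prob_le1 (R : realType) n alpha k : prob_explorable R n alpha k <= 1.
Proof.
rewrite /prob_explorable.
set Lc := #|{: star_labelling n alpha k}|.
set Ec := #|[set lab : star_labelling n alpha k | `[< explorable lab >]]|.
have hEL : (Ec <= Lc)%N by apply: max_card.
case: (posnP Lc) => [->|hL]; first by rewrite invr0 mulr0.
by rewrite ler_pdivrMr ?ltr0n // mul1r ler_nat.
Qed.

Local Open Scope classical_set_scope.
Local Open Scope ring_scope.

Theorem theorem7 (R : realType) (alpha k : nat -> nat)
  (halpha : forall n : nat, (2 * n <= alpha n)%N)
  (hk : forall n : nat, 6 * n%:R * ln (n%:R : R) <= (k n)%:R) :
  (fun n : nat => prob_explorable R n (alpha n) (k n)) @ \oo --> (1 : R).
Proof.
apply/cvgrPdist_lt => eps heps.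
pose N0 := (Num.Def.trunc (4 / eps ^+ 2)).+2.
exists N0 => // n /= hn.
have hn2 : (2 <= n)%N by apply: leq_trans hn; rewrite /N0.
have hb := real_bound (hn2) (halpha n) (hk n).
have h1 := prob_le1 R n (alpha n) (k n).
rewrite ger0_norm ?subr_ge0 //.
apply: (le_lt_trans hb).
set z := expR (- ln (n%:R : R) / 2).
have hz : 0 < z by apply: expR_gt0.
have hn0 : 0 < n%:R :> R by rewrite ltr0n; lia.
have hzz : z * z * n%:R = 1.
  rewrite /z -expRD -splitr -{2}(lnK (_ : n%:R \in Num.pos)) ?posrE //.
  by rewrite -expRD addNr expR0.
have hbig : 4 / eps ^+ 2 < n%:R.
  apply: (lt_le_trans (truncnS_gt _)).
  by rewrite ler_nat; apply: leq_trans hn; rewrite /N0.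
have hbig' : 4 < n%:R * eps ^+ 2.
  by rewrite -ltr_pdivrMr ?exprn_gt0.
have hz2 : 4 * (z * z) < eps ^+ 2.
  by rewrite -(ltr_pM2r hn0) -mulrA hzz mulr1 mulrC.
nra.
Qed.
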